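(* (a) Let $(A\oplus A^*;A,A^* )$ be a Manin triple of pre-Lie-Yamaguti algebras whose bilinear form is $\omega(x+\alpha,y+\beta)=\langle\alpha,y\rangle-\langle\beta,x\rangle$ ($x,y\in A$, $\alpha,\beta\in A^*$). Then $(A\oplus A^*,[\cdot,\cdot]_C,[\![\cdot,\cdot,\cdot]\!]_C;\omega)$, where $[\cdot,\cdot]_C,[\![\cdot,\cdot,\cdot]\!]_C$ are the brackets of the subadjacent Lie-Yamaguti algebra of the pre-Lie-Yamaguti algebra $A\oplus A^*$, is a symplectic Lie-Yamaguti algebra which is a phase space of the subadjacent Lie-Yamaguti algebra of $(A,*|_A,\{\cdot,\cdot,\cdot\}|_A)$. (b) Conversely, if $(\mathfrak h\oplus\mathfrak h^*,[\cdot,\cdot],[\![\cdot,\cdot,\cdot]\!];\omega_p)$ is a perfect phase space of a Lie-Yamaguti algebra $(\mathfrak h,[\cdot,\cdot]_{\mathfrak h},[\![\cdot,\cdot,\cdot]\!]_{\mathfrak h})$, then $(\mathfrak h\oplus\mathfrak h^*;\mathfrak h,\mathfrak h^* )$, with the pre-Lie-Yamaguti structure on $\mathfrak h\oplus\mathfrak h^*$ defined by $\omega_p(X*Y,Z)=-\omega_p(Y,[X,Z])$ and $\omega_p(\{X,Y,Z\},W)=\omega_p(X,[\![W,Z,Y]\!])$ and with form $\omega_p$, is a Manin triple of pre-Lie-Yamaguti algebras. Thus there is a one-to-one correspondence between Manin triples of pre-Lie-Yamaguti algebras and perfect phase spaces of Lie-Yamaguti algebras.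
   Context: All vector spaces are over a field of characteristic $0$ and finite-dimensional. A Lie-Yamaguti algebra is a vector space $\mathfrak g$ with a bilinear skew-symmetric $[\cdot,\cdot]$ and a trilinear $[\![\cdot,\cdot,\cdot]\!]$ skew-symmetric in its first two arguments such that for all $x,y,z,w,t$: (1) $[[x,y],z]+[[y,z],x]+[[z,x],y]+[\![x,y,z]\!]+[\![y,z,x]\!]+[\![z,x,y]\!]=0$; (2) $[\![[x,y],z,w]\!]+[\![[y,z],x,w]\!]+[\![[z,x],y,w]\!]=0$; (3) $[\![x,y,[z,w]]\!]=[[\![x,y,z]\!],w]+[z,[\![x,y,w]\!]]$; (4) $[\![x,y,[\![z,w,t]\!]]\!]=[\![[\![x,y,z]\!],w,t]\!]+[\![z,[\![x,y,w]\!],t]\!]+[\![z,w,[\![x,y,t]\!]]\!]$. A symplectic structure is a nondegenerate skew-symmetric bilinear form $\omega$ with $\omega(x,[y,z])+\omega(y,[z,x])+\omega(z,[x,y])=0$ and $\omega(z,[\![x,y,w]\!])-\omega(x,[\![w,z,y]\!])+\omega(y,[\![w,z,x]\!])-\omega(w,[\![x,y,z]\!])=0$. On $\mathfrak h\oplus\mathfrak h^*$, $\omega_p(x+\alpha,y+\beta)=\langle\alpha,y\rangle-\langle\beta,x\rangle$. A phase space of $\mathfrak h$ is a Lie-Yamaguti algebra structure on $\mathfrak h\oplus\mathfrak h^*$ for which $\omega_p$ is symplectic and $\mathfrak h$ (with its original brackets) and $\mathfrak h^*$ are Lie-Yamaguti subalgebras; it is perfect if for all $x,y\in\mathfrak h$,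 $\alpha,\beta\in\mathfrak h^*$: $[\![\alpha,\beta,x]\!]\in\mathfrak h$, $[\![x,\alpha,\beta]\!]\in\mathfrak h$, $[\![x,y,\alpha]\!]\in\mathfrak h^*$, $[\![\alpha,x,y]\!]\in\mathfrak h^*$. A pre-Lie-Yamaguti algebra is a vector space $A$ with a bilinear operation $*$ and a trilinear operation $\{\cdot,\cdot,\cdot\}$ such that, writing $[x,y]_C=x*y-y*x$, $(x,y,z)=(x*y)*z-x*(y*z)$ and $\{x,y,z\}_D=\{z,y,x\}-\{z,x,y\}+(y,x,z)-(x,y,z)$, for all $x,y,z,w,t\in A$: (P1) $\{z,[x,y]_C,w\}-\{y*z,x,w\}+\{x*z,y,w\}=0$; (P2) $\{x,y,[z,w]_C\}=z*\{x,y,w\}-w*\{x,y,z\}$; (P3) $\{\{x,y,z\},w,t\}-\{\{x,y,w\},z,t\}-\{x,y,\{z,w,t\}_D\}-\{x,y,\{z,w,t\}\}+\{x,y,\{w,z,t\}\}+\{z,w,\{x,y,t\}\}_D=0$; (P4) $\{z,\{x,y,w\}_D,t\}+\{z,\{x,y,w\},t\}-\{z,\{y,x,w\},t\}+\{z,w,\{x,y,t\}_D\}+\{z,w,\{x,y,t\}\}-\{z,w,\{y,x,t\}\}=\{x,y,\{z,w,t\}\}_D-\{\{x,y,z\}_D,w,t\}$; (P5) $\{x,y,z\}_D*w+\{x,y,z\}*w-\{y,x,z\}*w=\{x,y,z*w\}_D-z*\{x,y,w\}_D$. Its subadjacent Lie-Yamaguti algebra has brackets $[x,y]_C$ and $[\![x,y,z]\!]_C=\{x,y,z\}_D+\{x,y,z\}-\{y,x,z\}$.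 A quadratic pre-Lie-Yamaguti algebra is a pre-Lie-Yamaguti algebra with a nondegenerate skew-symmetric bilinear form $\omega$ such that $\omega(x*y,z)=-\omega(y,[x,z]_C)$ and $\omega(\{x,y,z\},w)=\omega(x,[\![w,z,y]\!]_C)$. A Manin triple of pre-Lie-Yamaguti algebras is a triple $(\mathscr A;A,A')$ where $(\mathscr A,*,\{\cdot,\cdot,\cdot\};\omega)$ is a quadratic pre-Lie-Yamaguti algebra, $\mathscr A=A\oplus A'$ as vector spaces with $A,A'$ subalgebras (closed under $*$ and $\{\cdot,\cdot,\cdot\}$), both $A$ and $A'$ isotropic for $\omega$, and for all $x,y\in A$, $\alpha,\beta\in A'$: $\{\alpha,\beta,x\},\{x,\alpha,\beta\},\{\alpha,x,\beta\}\in A$ and $\{x,y,\alpha\},\{\alpha,x,y\},\{x,\alpha,y\}\in A'$. Via $\langle\alpha,x\rangle:=\omega(\alpha,x)$, $A'$ is identified with $A^*$ and then $\omega$ takes the displayed form $\omega_p$. *)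

(* Defs.v *)
From HB Require Import structures.
From mathcomp Require Import all_boot all_order all_algebra.
Set Implicit Arguments. Unset Strict Implicit. Unset Printing Implicit Defensive.
Import GRing.Theory.
Local Open Scope ring_scope.

Section Generic.
Variables (R : fieldType) (U : lmodType R).

Definition bilinear_op (f : U -> U -> U) : Prop :=
  (forall (a : R) x x' y, f (a *: x + x') y = a *: f x y + f x' y) /\
  (forall (a : R) x y y', f x (a *: y + y') = a *: f x y + f x y').

Definition trilinear_op (f : U -> U -> U -> U) : Prop :=
  (forall (a : R) x x' y z, f (a *: x + x') y z = a *: f x y z + f x' y z) /\
  (forall (a : R) x y y' z, f x (a *: y + y') z = a *: f x y z + f x y' z) /\
  (forall (a : R) x y z z', f x y (a *: z + z') = a *: f x y z + f x y z').

Definition bilinear_form (w : U -> U -> R) : Prop :=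
  (forall (a : R) x x' y, w (a *: x + x') y = a * w x y + w x' y) /\
  (forall (a : R) x y y', w x (a *: y + y') = a * w x y + w x y').

Definition LY_alg (br : U -> U -> U) (tr : U -> U -> U -> U) : Prop :=
  [/\ bilinear_op br, trilinear_op tr,
      (forall x y, br x y = - br y x),
      (forall x y z, tr x y z = - tr y x z) &
   [/\ (forall x y z, br (br x y) z + br (br y z) x + br (br z x) y
                       + tr x y z + tr y z x + tr z x y = 0),
       (forall x y z w, tr (br x y) z w + tr (br y z) x w + tr (br z x) y w = 0),
       (forall x y z w, tr x y (br z w) = br (tr x y z) w + br z (tr x y w)) &
       (forall x y z w t, tr x y (tr z w t)
          = tr (tr x y z) w t + tr z (tr x y w) t + tr z w (tr x y t))]].

Definition nondegenerate (w : U -> U -> R) : Prop :=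
  forall x, (forall y, w x y = 0) -> x = 0.

Definition skew_form (w : U -> U -> R) : Prop := forall x y, w x y = - w y x.

Definition symplectic (br : U -> U -> U) (tr : U -> U -> U -> U) (w : U -> U -> R) : Prop :=
  [/\ bilinear_form w, skew_form w, nondegenerate w,
      (forall x y z, w x (br y z) + w y (br z x) + w z (br x y) = 0) &
      (forall x y z t, w z (tr x y t) - w x (tr t z y) + w y (tr t z x) - w t (tr x y z) = 0)].

Section PreLY.
Variables (mul : U -> U -> U) (cu : U -> U -> U -> U).
Definition commC x y := mul x y - mul y x.
Definition assoc x y z := mul (mul x y) z - mul x (mul y z).
Definition cuD x y z := cu z y x - cu z x y + assoc y x z - assoc x y z.
Definition trC x y z := cuD x y z + cu x y z - cu y x z.

Definition preLY_alg : Prop :=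
  [/\ bilinear_op mul, trilinear_op cu,
   (forall x y z w, cu z (commC x y) w - cu (mul y z) x w + cu (mul x z) y w = 0),
   (forall x y z w, cu x y (commC z w) = mul z (cu x y w) - mul w (cu x y z)) &
   [/\ (forall x y z w t, cu (cu x y z) w t - cu (cu x y w) z t - cu x y (cuD z w t)
          - cu x y (cu z w t) + cu x y (cu w z t) + cuD z w (cu x y t) = 0),
       (forall x y z w t, cu z (cuD x y w) t + cu z (cu x y w) t - cu z (cu y x w) t
          + cu z w (cuD x y t) + cu z w (cu x y t) - cu z w (cu y x t)
          = cuD x y (cu z w t) - cu (cuD x y z) w t) &
       (forall x y z w, mul (cuD x y z) w + mul (cu x y z) w - mul (cu y x z) w
          = cuD x y (mul z w) - mul z (cuD x y w))]].

Definition quadratic (w : U -> U -> R) : Prop :=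
  [/\ preLY_alg, bilinear_form w /\ skew_form w /\ nondegenerate w,
      (forall x y z, w (mul x y) z = - w y (commC x z)) &
      (forall x y z t, w (cu x y z) t = w x (trC t z y))].
End PreLY.
End Generic.

Section Double.
Variables (F : fieldType) (V : vectType F).

Definition dual := 'Hom(V, F^o).
Definition DS := (V * dual)%type.

Definition pair (a : dual) (x : V) : F := a x.

Definition omega_p (X Y : DS) : F := pair X.2 Y.1 - pair Y.2 X.1.

Definition inA (X : DS) : Prop := X.2 = 0.
Definition inAd (X : DS) : Prop := X.1 = 0.
Definition emb (x : V) : DS := (x, 0).
Definition embd (a : dual) : DS := (0, a).

Definition manin_triple (mul : DS -> DS -> DS) (cu : DS -> DS -> DS -> DS) : Prop :=
  [/\ quadratic mul cu omega_p,
      (forall x y, inA (mul (emb x) (emb y))) /\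
      (forall x y z, inA (cu (emb x) (emb y) (emb z))),
      (forall a b, inAd (mul (embd a) (embd b))) /\
      (forall a b c, inAd (cu (embd a) (embd b) (embd c))),
      (forall x y, omega_p (emb x) (emb y) = 0) /\
      (forall a b, omega_p (embd a) (embd b) = 0) &
      (forall x y a b,
        [/\ inA (cu (embd a) (embd b) (emb x)), inA (cu (emb x) (embd a) (embd b)) &
             inA (cu (embd a) (emb x) (embd b))] /\
        [/\ inAd (cu (emb x) (emb y) (embd a)), inAd (cu (embd a) (emb x) (emb y)) &
             inAd (cu (emb x) (embd a) (emb y))])].

Definition resA_mul (mul : DS -> DS -> DS) (x y : V) : V := (mul (emb x) (emb y)).1.
Definition resA_cu (cu : DS -> DS -> DS -> DS) (x y z : V) : V := (cu (emb x) (emb y) (emb z)).1.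

Definition phase_space (brh : V -> V -> V) (trh : V -> V -> V -> V)
    (br : DS -> DS -> DS) (tr : DS -> DS -> DS -> DS) : Prop :=
  [/\ LY_alg brh trh, LY_alg br tr, symplectic br tr omega_p,
      (forall x y, br (emb x) (emb y) = emb (brh x y)) /\
      (forall x y z, tr (emb x) (emb y) (emb z) = emb (trh x y z)) &
      (forall a b, inAd (br (embd a) (embd b))) /\
      (forall a b c, inAd (tr (embd a) (embd b) (embd c)))].

Definition perfect (tr : DS -> DS -> DS -> DS) : Prop :=
  forall x y a b,
  [/\ inA (tr (embd a) (embd b) (emb x)), inA (tr (emb x) (embd a) (embd b)),
      inAd (tr (emb x) (emb y) (embd a)) & inAd (tr (embd a) (emb x) (emb y))].
End Double.

(* Main.v *)
From HB Require Import structures.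
Require Import Defs.
From mathcomp Require Import all_boot all_order all_algebra.
From mathcomp Require Import ring.
Set Implicit Arguments. Unset Strict Implicit. Unset Printing Implicit Defensive.
Import GRing.Theory.
Local Open Scope ring_scope.

Section Gen.
Variables (R : fieldType) (U : lmodType R).
Implicit Types (x y z t : U) (a : R).

Section BO.
Variable f : U -> U -> U.
Hypothesis H : bilinear_op f.
Lemma bDl x y z : f (x + y) z = f x z + f y z.
Proof. by have := H.1 1 x y z; rewrite !scale1r. Qed.
Lemma bDr x y z : f z (x + y) = f z x + f z y.
Proof. by have := H.2 1 z x y; rewrite !scale1r. Qed.
Lemma b0l z : f 0 z = 0.
Proof. have h := bDl 0 0 z; rewrite addr0 in h.
by apply: (@addrI _ (f 0 z)); rewrite addr0; exact: esym h. Qed.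
Lemma b0r z : f z 0 = 0.
Proof. have h := bDr 0 0 z; rewrite addr0 in h.
by apply: (@addrI _ (f z 0)); rewrite addr0; exact: esym h. Qed.
Lemma bZl a x z : f (a *: x) z = a *: f x z.
Proof. by have := H.1 a x 0 z; rewrite !addr0 b0l addr0. Qed.
Lemma bZr a x z : f z (a *: x) = a *: f z x.
Proof. by have := H.2 a z x 0; rewrite !addr0 b0r addr0. Qed.
Lemma bNl x z : f (- x) z = - f x z.
Proof. by rewrite -scaleN1r bZl scaleN1r. Qed.
Lemma bNr x z : f z (- x) = - f z x.
Proof. by rewrite -scaleN1r bZr scaleN1r. Qed.
Lemma bBl x y z : f (x - y) z = f x z - f y z.
Proof. by rewrite bDl bNl. Qed.
Lemma bBr x y z : f z (x - y) = f z x - f z y.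
Proof. by rewrite bDr bNr. Qed.
End BO.

Section TO.
Variable f : U -> U -> U -> U.
Hypothesis H : trilinear_op f.
Lemma tD1 x y z t : f (x + y) z t = f x z t + f y z t.
Proof. by have := H.1 1 x y z t; rewrite !scale1r. Qed.
Lemma tD2 x y z t : f z (x + y) t = f z x t + f z y t.
Proof. by have := H.2.1 1 z x y t; rewrite !scale1r. Qed.
Lemma tD3 x y z t : f z t (x + y) = f z t x + f z t y.
Proof. by have := H.2.2 1 z t x y; rewrite !scale1r. Qed.
Lemma t01 z t : f 0 z t = 0.
Proof. have h := tD1 0 0 z t; rewrite addr0 in h.
by apply: (@addrI _ (f 0 z t)); rewrite addr0; exact: esym h. Qed.
Lemma t02 z t : f z 0 t = 0.
Proof. have h := tD2 0 0 z t; rewrite addr0 in h.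
by apply: (@addrI _ (f z 0 t)); rewrite addr0; exact: esym h. Qed.
Lemma t03 z t : f z t 0 = 0.
Proof. have h := tD3 0 0 z t; rewrite addr0 in h.
by apply: (@addrI _ (f z t 0)); rewrite addr0; exact: esym h. Qed.
Lemma tZ1 a x z t : f (a *: x) z t = a *: f x z t.
Proof. by have := H.1 a x 0 z t; rewrite !addr0 t01 addr0. Qed.
Lemma tZ2 a x z t : f z (a *: x) t = a *: f z x t.
Proof. by have := H.2.1 a z x 0 t; rewrite !addr0 t02 addr0. Qed.
Lemma tZ3 a x z t : f z t (a *: x) = a *: f z t x.
Proof. by have := H.2.2 a z t x 0; rewrite !addr0 t03 addr0. Qed.
Lemma tN1 x z t : f (- x) z t = - f x z t.
Proof. by rewrite -scaleN1r tZ1 scaleN1r. Qed.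
Lemma tN2 x z t : f z (- x) t = - f z x t.
Proof. by rewrite -scaleN1r tZ2 scaleN1r. Qed.
Lemma tN3 x z t : f z t (- x) = - f z t x.
Proof. by rewrite -scaleN1r tZ3 scaleN1r. Qed.
End TO.

Section BF.
Variable w : U -> U -> R.
Hypothesis H : bilinear_form w.
Lemma fDl x y z : w (x + y) z = w x z + w y z.
Proof. by have := H.1 1 x y z; rewrite scale1r mul1r. Qed.
Lemma fDr x y z : w z (x + y) = w z x + w z y.
Proof. by have := H.2 1 z x y; rewrite scale1r mul1r. Qed.
Lemma f0l z : w 0 z = 0.
Proof. have h := fDl 0 0 z; rewrite addr0 in h.
by apply: (@addrI _ (w 0 z)); rewrite addr0; exact: esym h. Qed.
Lemma f0r z : w z 0 = 0.
Proof. have h := fDr 0 0 z; rewrite addr0 in h.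
by apply: (@addrI _ (w z 0)); rewrite addr0; exact: esym h. Qed.
Lemma fZl a x z : w (a *: x) z = a * w x z.
Proof. by have := H.1 a x 0 z; rewrite !addr0 f0l addr0. Qed.
Lemma fZr a x z : w z (a *: x) = a * w z x.
Proof. by have := H.2 a z x 0; rewrite !addr0 f0r addr0. Qed.
Lemma fNl x z : w (- x) z = - w x z.
Proof. by rewrite -scaleN1r fZl mulN1r. Qed.
Lemma fNr x z : w z (- x) = - w z x.
Proof. by rewrite -scaleN1r fZr mulN1r. Qed.
End BF.

Lemma lc1 (a b g : R) : a = b -> g = a - b -> g = 0.
Proof. by move=> -> ->; rewrite subrr. Qed.
Lemma lc2 (a b c d g : R) : a = b -> c = d -> g = (a - b) + (c - d) -> g = 0.
Proof. by move=> -> -> ->; rewrite !subrr addr0. Qed.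

End Gen.
Lemma lce1 (R : fieldType) (a b g h : R) : a = b -> g - h = a - b -> g = h.
Proof. by move=> -> /eqP; rewrite subrr subr_eq0 => /eqP. Qed.
Lemma lce2 (R : fieldType) (a b c d g h : R) : a = b -> c = d -> g - h = (a - b) + (c - d) -> g = h.
Proof. by move=> -> -> /eqP; rewrite !subrr addr0 subr_eq0 => /eqP. Qed.

Section Core.
Variables (R : fieldType) (U : lmodType R).
Variables (w : U -> U -> R) (mul br : U -> U -> U) (cu tr : U -> U -> U -> U).
Hypotheses (Hw : bilinear_form w) (Hsk : skew_form w) (Hnd : Defs.nondegenerate w).
Hypotheses (Hmul : bilinear_op mul) (Hcu : trilinear_op cu).
Hypotheses (Hbr : bilinear_op br) (Htr : trilinear_op tr).
Hypotheses (brsk : forall x y, br x y = - br y x) (trsk : forall x y z, tr x y z = - tr y x z).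
Hypotheses (H1 : forall x y z, w (mul x y) z = - w y (br x z))
           (H2 : forall x y z t, w (cu x y z) t = w x (tr t z y)).
Hypothesis (Hcomm : forall x y, commC mul x y = br x y).
Hypothesis (LY1h : forall x y z, br (br x y) z + br (br y z) x + br (br z x) y
                       + tr x y z + tr y z x + tr z x y = 0).

Ltac lin := rewrite ?(fDl Hw, fNl Hw, fZl Hw, fDr Hw, fNr Hw, fZr Hw).

Lemma ndl X Y : (forall t, w X t = w Y t) -> X = Y.
Proof.
move=> h; apply/eqP; rewrite -subr_eq0; apply/eqP; apply: Hnd => t.
by lin; rewrite h subrr.
Qed.

Lemma ndr X Y : (forall t, w t X = w t Y) -> X = Y.
Proof. by move=> h; apply: ndl => t; rewrite Hsk [w Y t]Hsk h. Qed.

Lemma Q x y z t : w (cuD mul cu x y z) t = - w z (tr x y t).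
Proof.
rewrite /cuD /assoc; lin; rewrite !H2 !H1.
have e1 : w z (br (mul y x) t) = w z (br (mul x y) t) + w z (br (br y x) t).
  by rewrite -[br y x]Hcomm /commC (bBl Hbr) (fDr Hw) (fNr Hw); ring.
have e2 : w z (br (br y x) t) = - w z (br (br x y) t).
  by rewrite (brsk y x) (bNl Hbr) (fNr Hw).
have e3 : w z (br x (br y t)) = - w z (br (br y t) x).
  by rewrite brsk (fNr Hw).
have e4 : w z (br y (br x t)) = w z (br (br t x) y).
  by rewrite brsk (brsk x t) (bNl Hbr) opprK.
have e5 : w z (tr t y x) = - w z (tr y t x).
  by rewrite trsk (fNr Hw).
have L := congr1 (w z) (LY1h x y t); rewrite (f0r Hw) in L; lin.
move: L; rewrite !(fDr Hw) => L.
rewrite e1 e2 e3 e4 e5.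
apply: (lce1 L); ring.
Qed.

Lemma trC_of_S2
  (S2 : forall x y z t, w z (tr x y t) - w x (tr t z y) + w y (tr t z x) - w t (tr x y z) = 0)
  x y z : trC mul cu x y z = tr x y z.
Proof.
apply: ndl => t; rewrite /trC.
have QD := Q; set D := cuD mul cu in QD *; clearbody D.
lin; rewrite QD !H2 (Hsk (tr x y z)).
apply: (lce1 (esym (S2 x y z t))); ring.
Qed.

Hypothesis Htreq : forall x y z, trC mul cu x y z = tr x y z.

Lemma trC_exp x y z : tr x y z = cuD mul cu x y z + cu x y z - cu y x z.
Proof. by rewrite -Htreq. Qed.

Lemma P1pair x y z w0 t :
  w (cu z (commC mul x y) w0 - cu (mul y z) x w0 + cu (mul x z) y w0) t
  = w z (tr t w0 (br x y) - br (tr t w0 x) y - br x (tr t w0 y)).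
Proof.
lin; rewrite !H2 !H1 Hcomm.
rewrite [br y (tr t w0 x)]brsk (fNr Hw); ring.
Qed.

Lemma P2pair x y z w0 t :
  w (cu x y (commC mul z w0) - (mul z (cu x y w0) - mul w0 (cu x y z))) t
  = - w x (tr (br z w0) t y + tr (br w0 t) z y + tr (br t z) w0 y).
Proof.
lin; rewrite !H1 !H2 Hcomm.
rewrite [tr t (br z w0) y]trsk [br z t]brsk (tN1 Htr) !(fNr Hw); ring.
Qed.

Lemma P4pair x y z w0 t s :
  w (cu z (cuD mul cu x y w0) t + cu z (cu x y w0) t - cu z (cu y x w0) t
     + cu z w0 (cuD mul cu x y t) + cu z w0 (cu x y t) - cu z w0 (cu y x t)
     - (cuD mul cu x y (cu z w0 t) - cu (cuD mul cu x y z) w0 t)) s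
  = - w z (tr x y (tr s t w0) - tr (tr x y s) t w0 - tr s (tr x y t) w0
           - tr s t (tr x y w0)).
Proof.
have e1 := congr1 (fun v => w z (tr s t v)) (trC_exp x y w0).
have e2 := congr1 (fun v => w z (tr s v w0)) (trC_exp x y t).
move: e1 e2 => /= e1 e2.
have QD := Q; set D := cuD mul cu in QD e1 e2 *; clearbody D.
lin; rewrite !QD !H2 QD.
rewrite (tD3 Htr) (tN3 Htr) (tD3 Htr) !(fDr Hw) (fNr Hw) in e1.
rewrite (tD2 Htr) (tN2 Htr) (tD2 Htr) !(fDr Hw) (fNr Hw) in e2.
idtac.
rewrite e1 e2; ring.
Qed.

Lemma P5pair x y z w0 s :
  w (mul (cuD mul cu x y z) w0 + mul (cu x y z) w0 - mul (cu y x z) w0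
     - (cuD mul cu x y (mul z w0) - mul z (cuD mul cu x y w0))) s
  = w w0 (tr x y (br z s) - br (tr x y z) s - br z (tr x y s)).
Proof.
have e : mul (cuD mul cu x y z) w0 + mul (cu x y z) w0 - mul (cu y x z) w0
         = mul (tr x y z) w0.
  by rewrite trC_exp (bBl Hmul) (bDl Hmul).
rewrite e.
have QD := Q; set D := cuD mul cu in QD *; clearbody D.
lin; rewrite !H1 QD H1 QD.
rewrite [br z (tr x y s)]brsk (fNr Hw); ring.
Qed.

Lemma P3pair x y z w0 t s :
  w (cu (cu x y z) w0 t - cu (cu x y w0) z t - cu x y (cuD mul cu z w0 t)
     - cu x y (cu z w0 t) + cu x y (cu w0 z t) + cuD mul cu z w0 (cu x y t)) s
  = w x (tr (tr s t w0) z y - tr (tr s t z) w0 y - tr s (tr z w0 t) y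
         - tr (tr z w0 s) t y).
Proof.
have e1 := congr1 (fun v => w x (tr s v y)) (trC_exp z w0 t).
move: e1 => /= e1.
have QD := Q; set D := cuD mul cu in QD e1 *; clearbody D.
lin; rewrite !H2 QD H2.
rewrite (tD2 Htr) (tN2 Htr) (tD2 Htr) !(fDr Hw) (fNr Hw) in e1.
rewrite e1; ring.
Qed.

Lemma S2_of_trC x y z t :
  w z (tr x y t) - w x (tr t z y) + w y (tr t z x) - w t (tr x y z) = 0.
Proof.
have d : w (tr x y z) t = w (cuD mul cu x y z) t + w (cu x y z) t - w (cu y x z) t.
  by rewrite trC_exp; lin.
rewrite -(H2 x y z t) -(H2 y x z t) (Hsk t) d Q; ring.
Qed.

End Core.

Section Core1.
Variables (R : fieldType) (U : lmodType R).
Variables (w : U -> U -> R) (mul br : U -> U -> U).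
Hypotheses (Hw : bilinear_form w) (Hsk : skew_form w) (Hnd : Defs.nondegenerate w).
Hypotheses (Hbr : bilinear_op br).
Hypotheses (brsk : forall x y, br x y = - br y x).
Hypotheses (H1 : forall x y z, w (mul x y) z = - w y (br x z)).
Ltac lin := rewrite ?(fDl Hw, fNl Hw, fZl Hw, fDr Hw, fNr Hw, fZr Hw).

Lemma S1_of_comm (Hcomm : forall x y, commC mul x y = br x y) x y z :
  w x (br y z) + w y (br z x) + w z (br x y) = 0.
Proof.
have a : w x (br y z) = - w (mul y z) x + w (mul z y) x.
  by rewrite -Hcomm /commC; lin; rewrite (Hsk x (mul y z)) (Hsk x (mul z y)); ring.
rewrite a !H1 [br y x]brsk (fNr Hw); ring.
Qed.

Lemma comm_of_S1 (S1 : forall x y z, w x (br y z) + w y (br z x) + w z (br x y) = 0)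
  x y : commC mul x y = br x y.
Proof.
apply: (ndl Hw Hnd) => t; rewrite /commC; lin; rewrite !H1 (Hsk (br x y)) [br x t]brsk (fNr Hw).
apply: (lce1 (S1 x y t)); ring.
Qed.
End Core1.

Section Formal.
Variables (R : fieldType) (U : lmodType R).
Variables (w : U -> U -> R) (mul : U -> U -> U) (cu : U -> U -> U -> U).
Hypotheses (Hw : bilinear_form w) (Hsk : skew_form w) (Hnd : Defs.nondegenerate w).
Hypotheses (Hmul : bilinear_op mul) (Hcu : trilinear_op cu).
Ltac lin := rewrite ?(fDl Hw, fNl Hw, fZl Hw, fDr Hw, fNr Hw, fZr Hw).
Ltac mlin := rewrite ?(bDl Hmul, bNl Hmul, bZl Hmul, bDr Hmul, bNr Hmul, bZr Hmul).
Ltac clin := rewrite ?(tD1 Hcu, tN1 Hcu, tZ1 Hcu, tD2 Hcu, tN2 Hcu, tZ2 Hcu, tD3 Hcu, tN3 Hcu, tZ3 Hcu).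

Lemma commC_skew x y : commC mul x y = - commC mul y x.
Proof. by rewrite /commC opprB. Qed.

Lemma trC_skew x y z : trC mul cu x y z = - trC mul cu y x z.
Proof. apply: (ndl Hw Hnd) => t; rewrite /trC /cuD /assoc; lin; ring. Qed.

Lemma commC_bil : bilinear_op (commC mul).
Proof.
split=> a x x' y; apply: (ndl Hw Hnd) => t; rewrite /commC; mlin; lin; ring.
Qed.

Lemma trC_tril : trilinear_op (trC mul cu).
Proof.
split; [|split]=> a x x' y z; apply: (ndl Hw Hnd) => t; rewrite /trC /cuD /assoc;
  mlin; clin; mlin; lin; ring.
Qed.

Lemma LY1_formal x y z :
  commC mul (commC mul x y) z + commC mul (commC mul y z) x + commC mul (commC mul z x) y
  + trC mul cu x y z + trC mul cu y z x + trC mul cu z x y = 0.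
Proof.
apply: Hnd => t; rewrite /commC /trC /cuD /assoc; mlin; lin; ring.
Qed.
End Formal.

Section DSlem.
Variables (F : fieldType) (V : vectType F).
Local Notation DS := (DS V).
Local Notation om := (@omega_p F V).
Implicit Types (X Y Z : DS) (x y : V) (a b : dual V).

Lemma emb_inj x y : emb x = emb y -> x = y.
Proof. by move/(congr1 fst). Qed.
Lemma embD x y : emb (x + y) = emb x + emb y.
Proof. by rewrite /emb; congr (_, _); rewrite addr0. Qed.
Lemma embN x : emb (- x) = - emb x.
Proof. by rewrite /emb; congr (_, _); rewrite oppr0. Qed.
Lemma embZ (k : F) x : emb (k *: x) = k *: emb x.
Proof. by rewrite /emb; congr (_, _); rewrite scaler0. Qed.
Lemma emb0 : emb 0 = 0 :> DS.
Proof. by []. Qed.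

Lemma inA_emb x : inA (emb x). Proof. by []. Qed.
Lemma inAd_embd a : inAd (embd a). Proof. by []. Qed.
Lemma inA_K X : inA X -> emb X.1 = X.
Proof. by case: X => x a; rewrite /inA /inAd /emb /embd /= => ->. Qed.
Lemma inAd_K X : inAd X -> embd X.2 = X.
Proof. by case: X => x a; rewrite /inA /inAd /emb /embd /= => ->. Qed.
Lemma inAN X : inA X -> inA (- X).
Proof. by rewrite /inA /= => ->; rewrite oppr0. Qed.
Lemma inAdN X : inAd X -> inAd (- X).
Proof. by rewrite /inAd /= => ->; rewrite oppr0. Qed.
Lemma inAB X Y : inA X -> inA Y -> inA (X - Y).
Proof. by rewrite /inA /= => -> ->; rewrite subrr. Qed.
Lemma inAdB X Y : inAd X -> inAd Y -> inAd (X - Y).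
Proof. by rewrite /inAd /= => -> ->; rewrite subrr. Qed.
Lemma inAD X Y : inA X -> inA Y -> inA (X + Y).
Proof. by rewrite /inA /= => -> ->; rewrite addr0. Qed.
Lemma inAdD X Y : inAd X -> inAd Y -> inAd (X + Y).
Proof. by rewrite /inAd /= => -> ->; rewrite addr0. Qed.

Lemma isoA X Y : inA X -> inA Y -> om X Y = 0.
Proof. by rewrite /inA /omega_p /pair => -> ->; rewrite !zero_lfunE subrr. Qed.
Lemma isoD X Y : inAd X -> inAd Y -> om X Y = 0.
Proof. by rewrite /inAd /omega_p /pair => -> ->; rewrite !linear0 subrr. Qed.

Lemma inA_of X : (forall z, om X (emb z) = 0) -> inA X.
Proof.
move=> h; apply/lfunP => z; rewrite zero_lfunE; have := h z.
by rewrite /omega_p /pair /= zero_lfunE subr0.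
Qed.

Lemma inAd_of (Hnd : Defs.nondegenerate om) X : (forall c, om X (embd c) = 0) -> inAd X.
Proof.
move=> h; rewrite /inAd.
suff : emb X.1 = 0 by move/(congr1 fst).
apply: Hnd => Z; rewrite /omega_p /pair /= zero_lfunE sub0r.
have := h Z.2; rewrite /omega_p /pair /= linear0 sub0r.
by [].
Qed.

End DSlem.

Section Rep.
Variables (F : fieldType) (V : vectType F).
Local Notation DS := (DS V).
Local Notation om := (@omega_p F V).

Lemma linfunE' (aT rT : vectType F) (f : aT -> rT) :
  (forall a x y, f (a *: x + y) = a *: f x + f y) -> linfun f =1 f.
Proof.
move=> H.
pose fL : {linear aT -> rT} := HB.pack f (GRing.isLinear.Build _ _ _ _ f H).
exact: (lfunE fL).
Qed.

Definition omh (X : DS) : 'Hom(DS, F^o) := linfun (om X : DS -> F^o).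
Definition Phi : 'Hom(DS, 'Hom(DS, F^o)) := linfun omh.

Hypotheses (Hw : bilinear_form om) (Hnd : Defs.nondegenerate om).

Lemma omhE X Z : omh X Z = om X Z.
Proof. by rewrite /omh linfunE' // => a x y; rewrite Hw.2. Qed.

Lemma PhiE X Z : Phi X Z = om X Z.
Proof.
rewrite /Phi linfunE' ?omhE // => a x y; apply/lfunP => Z'.
by rewrite add_lfunE scale_lfunE !omhE Hw.1.
Qed.

Lemma Phi_inj : injective Phi.
Proof.
move=> X Y e; apply: (ndl Hw Hnd) => t; by rewrite -!PhiE e.
Qed.

Lemma limg_Phi : limg Phi = fullv.
Proof.
apply/eqP; rewrite eqEdim subvf /=.
rewrite limg_dim_eq; last by have /lker0P/eqP -> := Phi_inj; rewrite capv0.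
rewrite !dimvf.
by change ((dim V + dim V * 1) * 1 <= dim V + dim V * 1)%N; rewrite muln1.
Qed.

Lemma rep (f : DS -> F) : (forall a x y, f (a *: x + y) = a * f x + f y) ->
  forall Z, om ((Phi^-1)%VF (linfun (f : DS -> F^o))) Z = f Z.
Proof.
move=> lf Z; rewrite -PhiE limg_lfunVK; last by rewrite limg_Phi memvf.
by rewrite linfunE'.
Qed.
End Rep.

Section Transport.
Variables (F : fieldType) (V : vectType F).
Local Notation DS := (DS V).
Variables (brh : V -> V -> V) (trh : V -> V -> V -> V) (br : DS -> DS -> DS) (tr : DS -> DS -> DS -> DS).
Hypotheses (Ebr : forall x y, br (emb x) (emb y) = emb (brh x y))
  (Etr : forall x y z, tr (emb x) (emb y) (emb z) = emb (trh x y z)).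

Ltac push_emb := do ![rewrite embD|rewrite embN|rewrite embZ|rewrite emb0|rewrite -Ebr|rewrite -Etr].

Lemma LY_transport : LY_alg br tr -> LY_alg brh trh.
Proof.
case=> Hb Ht bs ts [L1 L2 L3 L4].
have push : forall x y, emb x = emb y -> x = y := @emb_inj F V.
split.
- split=> a x x' y; apply: push;
  push_emb; by rewrite ?(Hb.1, Hb.2).
- split; [|split] => a x x' y z; apply: push;
  push_emb; by rewrite ?(Ht.1, Ht.2.1, Ht.2.2).
- move=> x y; apply: push; push_emb; exact: bs.
- move=> x y z; apply: push; push_emb; exact: ts.
split.
- move=> x y z; apply: push; push_emb; exact: L1.
- move=> x y z w; apply: push; push_emb; exact: L2.
- move=> x y z w; apply: push; push_emb; exact: L3.
- move=> x y z w t; apply: push; push_emb; exact: L4.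
Qed.
End Transport.

Lemma defect2 (R : fieldType) (U : lmodType R) (a b c : U) : a = b + c -> a - b - c = 0.
Proof. by move=> ->; rewrite -addrA -opprD subrr. Qed.
Lemma defect3 (R : fieldType) (U : lmodType R) (a b c d : U) : a = b + c + d -> a - b - c - d = 0.
Proof. by move=> ->; rewrite -!addrA -!opprD !addrA subrr. Qed.
Lemma undefect2 (R : fieldType) (U : lmodType R) (a b c : U) : a - b - c = 0 -> a = b + c.
Proof. by move/eqP; rewrite -addrA -opprD subr_eq0 => /eqP. Qed.
Lemma undefect3 (R : fieldType) (U : lmodType R) (a b c d : U) : a - b - c - d = 0 -> a = b + c + d.
Proof. by move/eqP; rewrite -!addrA -!opprD !addrA subr_eq0 => /eqP. Qed.

Section PartB.
Variables (F : fieldType) (V : vectType F).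
Local Notation DS := (DS V).
Local Notation om := (@omega_p F V).
Variables (brh : V -> V -> V) (trh : V -> V -> V -> V) (br : DS -> DS -> DS) (tr : DS -> DS -> DS -> DS).
Hypotheses (Hph : phase_space brh trh br tr) (Hpf : perfect tr).

Lemma partB_exists : exists (mul : DS -> DS -> DS) (cu : DS -> DS -> DS -> DS),
        (forall X Y Z, om (mul X Y) Z = - om Y (br X Z)) /\
        (forall X Y Z W, om (cu X Y Z) W = om X (tr W Z Y)).
Proof.
case: Hph => _ [Hb Ht _ _ _] [Hw Hsk Hnd _ _] _ _.
exists (fun X Y => (Phi V)^-1%VF (linfun ((fun Z => - om Y (br X Z)) : DS -> F^o))).
exists (fun X Y Z => (Phi V)^-1%VF (linfun ((fun W => om X (tr W Z Y)) : DS -> F^o))).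
split.
- move=> X Y Z; rewrite rep // => a x y.
  by rewrite (bDr Hb) (bZr Hb) (fDr Hw) (fZr Hw); ring.
- move=> X Y Z W; rewrite rep // => a x y.
  by rewrite (tD1 Ht) (tZ1 Ht) (fDr Hw) (fZr Hw).
Qed.


Lemma partB_manin (mul : DS -> DS -> DS) (cu : DS -> DS -> DS -> DS)
  (H1 : forall X Y Z, om (mul X Y) Z = - om Y (br X Z))
  (H2 : forall X Y Z W, om (cu X Y Z) W = om X (tr W Z Y)) : manin_triple mul cu.
Proof.
case: Hph => _ [Hb Ht bs ts [L1 L2 L3 L4]] [Hw Hsk Hnd S1 S2] [Ebr Etr] [Dbr Dtr].
have Hcomm : forall x y, commC mul x y = br x y.
  by move=> x y; apply: (comm_of_S1 (w:=om)).
have Hmul : bilinear_op mul.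
  split=> a x x' y; apply: (ndl Hw Hnd) => t;
  rewrite ?(fDl Hw, fZl Hw) !H1 ?(bDl Hb, bZl Hb, bDr Hb, bZr Hb) ?(fDl Hw, fZl Hw, fDr Hw, fZr Hw); ring.
have Hcu : trilinear_op cu.
  split; [|split]=> a x x' y z; apply: (ndl Hw Hnd) => t;
  rewrite ?(fDl Hw, fZl Hw) !H2
     ?(tD1 Ht, tZ1 Ht, tD2 Ht, tZ2 Ht, tD3 Ht, tZ3 Ht) ?(fDl Hw, fZl Hw, fDr Hw, fZr Hw); ring.
have Htreq : forall x y z, trC mul cu x y z = tr x y z.
  exact: (trC_of_S2 Hw Hsk Hnd Hb bs ts H1 H2 Hcomm L1 S2).
have E3 : forall s t z w0 y, tr (tr s t w0) z y - tr (tr s t z) w0 y - tr s (tr z w0 t) y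
    - tr (tr z w0 s) t y = 0.
  move=> s t z w0 y; apply: Hnd => x.
  have e1 := congr1 (om^~ x) (L4 s t z w0 y).
  have e2 := congr1 (om^~ x) (L4 z w0 s t y).
  move: e1 e2 => /= e1 e2.
  rewrite [tr z (tr s t w0) y]ts in e1.
  rewrite !(fDl Hw, fNl Hw) in e1 e2.
  rewrite !(fDl Hw, fNl Hw).
  apply: (lc2 e1 e2); ring.
have pre : preLY_alg mul cu.
  split=> //.
  - move=> x y z w0; apply: Hnd => t.
    by rewrite (P1pair Hw bs H1 H2 Hcomm) (defect2 (L3 t w0 x y)) (f0r Hw).
  - move=> x y z w0; apply/eqP; rewrite -subr_eq0; apply/eqP; apply: Hnd => t.
    by rewrite (P2pair Hw Ht bs ts H1 H2 Hcomm) L2 (f0r Hw) oppr0.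
  split.
  - move=> x y z w0 t; apply: Hnd => s.
    by rewrite (P3pair Hw Hb Ht bs ts H1 H2 Hcomm L1 Htreq) E3 (f0r Hw).
  - move=> x y z w0 t; apply/eqP; rewrite -subr_eq0; apply/eqP; apply: Hnd => s.
    by rewrite (P4pair Hw Hb Ht bs ts H1 H2 Hcomm L1 Htreq) (defect3 (L4 x y s t w0)) (f0r Hw) oppr0.
  - move=> x y z w0; apply/eqP; rewrite -subr_eq0; apply/eqP; apply: Hnd => s.
    by rewrite (P5pair Hw Hmul Hb bs ts H1 H2 Hcomm L1 Htreq) (defect2 (L3 x y z s)) (f0r Hw).
split.
- split=> //.
  + by move=> x y z; rewrite Hcomm.
  + by move=> x y z t; rewrite Htreq.
- split=> x y.
  + apply: inA_of => z; rewrite H1 Ebr isoA ?oppr0 //.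
  + move=> z; apply: inA_of => t; rewrite H2 Etr isoA //.
- split=> a b.
  + apply: (inAd_of Hnd) => c; rewrite H1 isoD ?oppr0 //; exact: Dbr.
  + move=> c; apply: (inAd_of Hnd) => d; rewrite H2 isoD //; exact: Dtr.
- by split=> ? ?; [apply: isoA | apply: isoD].
move=> x y a b.
split; split.
- by apply: inA_of => z; rewrite H2 isoD //; case: (Hpf z x b b) => ? ? ? ?.
- by apply: inA_of => z; rewrite H2 isoA //; case: (Hpf z z b a) => ? ? ? ?.
- apply: inA_of => z; rewrite H2 isoD // ts; apply: inAdN; by case: (Hpf z x b b) => ? ? ? ?.
- by apply: (inAd_of Hnd) => d; rewrite H2 isoA //; case: (Hpf y y d a) => ? ? ? ?.
- by apply: (inAd_of Hnd) => d; rewrite H2 isoD //; case: (Hpf y x d d) => ? ? ? ?.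
- apply: (inAd_of Hnd) => d; rewrite H2 isoA // ts; apply: inAN; by case: (Hpf y y d a) => ? ? ? ?.
Qed.

End PartB.

Section PartA.
Variables (F : fieldType) (V : vectType F).
Local Notation DS := (DS V).
Local Notation om := (@omega_p F V).
Variables (mul : DS -> DS -> DS) (cu : DS -> DS -> DS -> DS).
Hypothesis Hm : manin_triple mul cu.

Lemma partA_LY : LY_alg (commC mul) (trC mul cu).
Proof.
case: Hm => [[[Hmul Hcu P1 P2 [P3 P4 P5]] [Hw [Hsk Hnd]] H1 H2] _ _ _ _].
have Hb := commC_bil Hw Hnd Hmul.
have Ht := trC_tril Hw Hnd Hmul Hcu.
have bs := commC_skew mul.
have ts := trC_skew mul cu Hw Hnd.
have Hcomm : forall x y, commC mul x y = commC mul x y by [].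
have Htreq : forall x y z, trC mul cu x y z = trC mul cu x y z by [].
have L1 := LY1_formal cu Hw Hnd Hmul.
split=> //; split=> //.
- move=> x y z w0; apply: (ndr Hw Hsk Hnd) => u.
  have h := P2pair Hw Ht bs ts H1 H2 Hcomm u w0 x y z.
  rewrite P2 subrr (f0l Hw) in h.
  by rewrite (f0r Hw); apply/eqP; rewrite -oppr_eq0 -h.
- move=> a b c d; apply: undefect2; apply: (ndr Hw Hsk Hnd) => u.
  have h := P1pair Hw bs H1 H2 Hcomm c d u b a.
  by rewrite P1 (f0l Hw) in h; rewrite (f0r Hw) h.
- move=> a b c d e; apply: undefect3; apply: (ndr Hw Hsk Hnd) => u.
  have h := P4pair Hw Hb Ht bs ts H1 H2 Hcomm L1 Htreq a b u e d c.
  rewrite P4 subrr (f0l Hw) in h.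
  by rewrite (f0r Hw); apply/eqP; rewrite -oppr_eq0 -h.
Qed.

Lemma partA_symp : symplectic (commC mul) (trC mul cu) om.
Proof.
case: Hm => [[[Hmul Hcu P1 P2 [P3 P4 P5]] [Hw [Hsk Hnd]] H1 H2] _ _ _ _].
have Hb := commC_bil Hw Hnd Hmul.
have bs := commC_skew mul.
have ts := trC_skew mul cu Hw Hnd.
have Hcomm : forall x y, commC mul x y = commC mul x y by [].
have Htreq : forall x y z, trC mul cu x y z = trC mul cu x y z by [].
have L1 := LY1_formal cu Hw Hnd Hmul.
split=> //.
- exact: (S1_of_comm Hw Hsk bs H1 Hcomm).
- exact: (S2_of_trC Hw Hsk Hb bs ts H1 H2 Hcomm L1 Htreq).
Qed.

Lemma partA_phase : phase_space (commC (resA_mul mul)) (trC (resA_mul mul) (resA_cu cu))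
                 (commC mul) (trC mul cu).
Proof.
have LYa := partA_LY; have Sy := partA_symp.
case: Hm => [_ [SA1 SA2] [SD1 SD2] _ _].
have embR : forall x y, emb (resA_mul mul x y) = mul (emb x) (emb y).
  by move=> x y; apply: inA_K.
have embC : forall x y z, emb (resA_cu cu x y z) = cu (emb x) (emb y) (emb z).
  by move=> x y z; apply: inA_K.
have Ebr : forall x y, commC mul (emb x) (emb y) = emb (commC (resA_mul mul) x y).
  by move=> x y; rewrite /commC embD embN !embR.
have Etr : forall x y z, trC mul cu (emb x) (emb y) (emb z)
                         = emb (trC (resA_mul mul) (resA_cu cu) x y z).
  move=> x y z; rewrite /trC /cuD /assoc.
  by do ![rewrite embD|rewrite embN|rewrite embR|rewrite embC].
have mulAd : forall X Y, inAd X -> inAd Y -> inAd (mul X Y).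
  by move=> X Y hX hY; rewrite -(inAd_K hX) -(inAd_K hY); apply: SD1.
have cuAd : forall X Y Z, inAd X -> inAd Y -> inAd Z -> inAd (cu X Y Z).
  by move=> X Y Z hX hY hZ; rewrite -(inAd_K hX) -(inAd_K hY) -(inAd_K hZ); apply: SD2.
split=> //.
- exact: (LY_transport Ebr Etr).
split.
- move=> a b; rewrite /commC.
  by repeat first [apply: inAdD | apply: inAdN | apply: mulAd | apply: cuAd | exact: inAd_embd].
- move=> a b c; rewrite /trC /cuD /assoc.
  by repeat first [apply: inAdD | apply: inAdN | apply: mulAd | apply: cuAd | exact: inAd_embd].
Qed.

End PartA.

Unset Implicit Arguments.

Theorem theorem4p13 (F : fieldType) (V : vectType F) (F_char0 : [pchar F] =i pred0) :
  (* (a) *)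
  (forall (mul : DS V -> DS V -> DS V) (cu : DS V -> DS V -> DS V -> DS V),
     manin_triple mul cu ->
     LY_alg (commC mul) (trC mul cu) /\
     symplectic (commC mul) (trC mul cu) (@omega_p F V) /\
     phase_space (commC (resA_mul mul)) (trC (resA_mul mul) (resA_cu cu))
                 (commC mul) (trC mul cu)) /\
  (* (b) *)
  (forall (brh : V -> V -> V) (trh : V -> V -> V -> V)
          (br : DS V -> DS V -> DS V) (tr : DS V -> DS V -> DS V -> DS V),
     phase_space brh trh br tr -> perfect tr ->
     (exists (mul : DS V -> DS V -> DS V) (cu : DS V -> DS V -> DS V -> DS V),
        (forall X Y Z, omega_p (mul X Y) Z = - omega_p Y (br X Z)) /\
        (forall X Y Z W, omega_p (cu X Y Z) W = omega_p X (tr W Z Y))) /\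
     (forall (mul : DS V -> DS V -> DS V) (cu : DS V -> DS V -> DS V -> DS V),
        (forall X Y Z, omega_p (mul X Y) Z = - omega_p Y (br X Z)) ->
        (forall X Y Z W, omega_p (cu X Y Z) W = omega_p X (tr W Z Y)) ->
        manin_triple mul cu)).
Proof.
split.
- move=> mul cu Hm; split; first exact: (partA_LY Hm).
  split; first exact: (partA_symp Hm).
  exact: (partA_phase Hm).
- move=> brh trh br tr Hph Hpf; split; first exact: (partB_exists Hph).
  move=> mul cu H1 H2; exact: (partB_manin Hph Hpf H1 H2).
Qed.
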